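(* In the setting described in the context, let $\hat u_0=\min\{x\in[v,z_0]: f^2(x)=d\}$, and for $n\ge1$ let $\hat\mu'_{m,n}=\max\{x\in[v,\hat u_0]: f^{m+2n}(x)=d\}$ (these sets are nonempty). Then for each $n\ge1$, every periodic point of $f$ in $[\hat\mu'_{m,n},\hat u_0]$ whose least period is odd has least period $\ge m+2n$.
   Context: Let $I$ be a compact interval and $f:I\to I$ continuous; $f^1=f$, $f^n=f\circ f^{n-1}$. A point $x_0$ is a periodic point of least period $k$ (a period-$k$ point) if $f^k(x_0)=x_0$ and $f^i(x_0)\ne x_0$ for $0<i<k$. Let $m\ge3$ be odd and let $P$ be a periodic orbit of $f$ of least period $m$. Put $e=f^{m-1}(\min P)$. Let $v\in[\min P,e)$ be a point with $f(v)=e$, and let $z\in(v,e)$ be a fixed point of $f$ (such points exist). Define $z_0=\min\{x\in[v,z]: f^2(x)=x\}$ and $d=\max\{x\in[\min P,v]: f^2(x)=z_0\}$ (both sets are nonempty). *)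

(* Defs.v *)
From Stdlib Require Import Reals Lra Lia.
Open Scope R_scope.

Definition iter (f : R -> R) (n : nat) (x : R) : R := Nat.iter n f x.

Definition cont_on (a b : R) (f : R -> R) : Prop :=
  forall x, a <= x <= b ->
  forall eps, 0 < eps -> exists delta, 0 < delta /\
    forall y, a <= y <= b -> Rabs (y - x) < delta -> Rabs (f y - f x) < eps.

Definition maps_into (a b : R) (f : R -> R) : Prop :=
  forall x, a <= x <= b -> a <= f x <= b.

Definition least_period (f : R -> R) (x : R) (k : nat) : Prop :=
  (0 < k)%nat /\ iter f k x = x /\
  forall i, (0 < i < k)%nat -> iter f i x <> x.

Definition is_min_of (S : R -> Prop) (x : R) : Prop :=
  S x /\ forall y, S y -> x <= y.
Definition is_max_of (S : R -> Prop) (x : R) : Prop :=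
  S x /\ forall y, S y -> y <= x.

(* Main.v *)
Require Import Defs.
From Stdlib Require Import Reals Lra Lia Arith.
Open Scope R_scope.

Lemma iter_add f (p q : nat) x : iter f (p + q) x = iter f p (iter f q x).
Proof. unfold iter. induction p; simpl; [reflexivity| now rewrite IHp]. Qed.

Lemma iter_maps a b f : maps_into a b f -> forall n x, a <= x <= b -> a <= iter f n x <= b.
Proof. intros H n; induction n; intros x Hx; [exact Hx|]. unfold iter; simpl. apply H, IHn, Hx. Qed.

Lemma iter_cont a b f : cont_on a b f -> maps_into a b f -> forall n, cont_on a b (iter f n).
Proof.
  intros Hc Hm n; induction n.
  - intros x Hx eps He. exists eps. split; [exact He|]. intros y Hy Hd. unfold iter; simpl. exact Hd.
  - intros x Hx eps He.
    destruct (Hc (iter f n x) (iter_maps a b f Hm n x Hx) eps He) as [d1 [Hd1 H1]].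
    destruct (IHn x Hx d1 Hd1) as [d2 [Hd2 H2]].
    exists d2; split; [exact Hd2|]. intros y Hy Hyx.
    change (Rabs (f (iter f n y) - f (iter f n x)) < eps).
    apply H1; [apply iter_maps; auto | apply H2; auto].
Qed.

Lemma cont_id_minus a b f : cont_on a b f -> cont_on a b (fun t => t - f t).
Proof.
  intros Hc x Hx eps He. destruct (Hc x Hx (eps/2)) as [d1 [Hd1 H1]]; [lra|].
  exists (Rmin d1 (eps/2)). split; [apply Rmin_pos; lra|]. intros y Hy Hyx.
  assert (A := H1 y Hy (Rlt_le_trans _ _ _ Hyx (Rmin_l _ _))).
  assert (B := Rlt_le_trans _ _ _ Hyx (Rmin_r _ _)).
  revert A B. unfold Rabs; repeat destruct Rcase_abs; lra.
Qed.

Definition clamp (a b y : R) := Rmax a (Rmin b y).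

Lemma clamp_in a b y : a <= b -> a <= clamp a b y <= b.
Proof. intros. unfold clamp, Rmax, Rmin; repeat destruct Rle_dec; lra. Qed.
Lemma clamp_id a b y : a <= y <= b -> clamp a b y = y.
Proof. intros. unfold clamp, Rmax, Rmin; repeat destruct Rle_dec; lra. Qed.
Lemma clamp_lip a b y y0 : a <= b -> Rabs (clamp a b y - clamp a b y0) <= Rabs (y - y0).
Proof. intros. unfold clamp, Rmax, Rmin; repeat destruct Rle_dec; unfold Rabs; repeat destruct Rcase_abs; lra. Qed.

Lemma ivt_on a b h p q t : a <= b -> cont_on a b h -> a <= p -> p <= q -> q <= b ->
  h p <= t -> t <= h q -> exists y, p <= y <= q /\ h y = t.
Proof.
  intros Hab Hc Hp Hpq Hq H1 H2.
  set (F := fun y => h (clamp a b y) - t).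
  assert (HF : continuity F).
  { intros y0 eps He.
    destruct (Hc (clamp a b y0) (clamp_in a b y0 Hab) eps He) as [d [Hd H]].
    exists d. split; [exact Hd|]. intros y [_ Hy]. simpl in *. unfold R_dist in *. unfold F.
    replace (h (clamp a b y) - t - (h (clamp a b y0) - t)) with (h (clamp a b y) - h (clamp a b y0)) by ring.
    apply H; [apply clamp_in; auto|]. eapply Rle_lt_trans; [apply clamp_lip; auto|exact Hy]. }
  assert (Fp : F p = h p - t) by (unfold F; rewrite clamp_id; lra).
  assert (Fq : F q = h q - t) by (unfold F; rewrite clamp_id; lra).
  destruct (IVT_cor F p q HF Hpq) as [y [Hy Fy]].
  { rewrite Fp, Fq. nra. }
  exists y. split; [exact Hy|]. unfold F in Fy. rewrite clamp_id in Fy; lra.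
Qed.

Theorem lemma10
  (a b : R) (f : R -> R) (m : nat) (p0 v z z0 d u0 : R)
  (Hab : a <= b)
  (Hcont : cont_on a b f) (Hmaps : maps_into a b f)
  (Hm3 : (3 <= m)%nat) (Hmodd : Nat.Odd m)
  (Hp0I : a <= p0 <= b)
  (Hp0per : least_period f p0 m)
  (Hp0min : forall i, (i < m)%nat -> p0 <= iter f i p0)
  (Hv : p0 <= v < iter f (m - 1) p0)
  (Hfv : f v = iter f (m - 1) p0)
  (Hz : v < z < iter f (m - 1) p0)
  (Hfz : f z = z)
  (Hz0 : is_min_of (fun x => v <= x <= z /\ iter f 2 x = x) z0)
  (Hd : is_max_of (fun x => p0 <= x <= v /\ iter f 2 x = z0) d)
  (Hu0 : is_min_of (fun x => v <= x <= z0 /\ iter f 2 x = d) u0) :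
  forall (n : nat) (mu : R), (1 <= n)%nat ->
    is_max_of (fun x => v <= x <= u0 /\ iter f (m + 2 * n) x = d) mu ->
    forall (x : R) (k : nat), mu <= x <= u0 ->
      least_period f x k -> Nat.Odd k -> (m + 2 * n <= k)%nat.
Proof.
  intros n mu Hn Hmu x k Hx Hk Hkodd.
  destruct (Compare_dec.le_lt_dec (m + 2*n) k) as [|Hlt]; [assumption| exfalso].
  destruct Hp0per as [_ [Hpm Hpi]].
  destruct Hz0 as [[[Hz0a Hz0b] Hz0f] Hz0min].
  destruct Hd as [[[Hd1 Hd2] Hdf] Hdmax].
  destruct Hu0 as [[[Hu1 Hu2] Hu0f] Hu0min].
  destruct Hmu as [[[Hmu1 Hmu2] Hmuf] Hmumax].
  destruct Hk as [Hk0 [Hkx Hki]].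
  set (e := iter f (m - 1) p0) in *.
  assert (He : f e = p0).
  { unfold e. rewrite <- Hpm at 2. destruct m; [lia|]. unfold iter; simpl. now rewrite Nat.sub_0_r. }
  assert (Heb : a <= e <= b) by (apply iter_maps; auto).
  assert (Hg2 : forall y, iter f 2 y = f (f y)) by reflexivity.
  assert (Hgv : iter f 2 v = p0) by (rewrite Hg2, Hfv; exact He).
  assert (Hc2 := iter_cont a b f Hcont Hmaps).
  assert (Hfz0 : z0 <= f z0).
  { destruct (Rle_lt_dec z0 (f z0)) as [|Hl]; [assumption|exfalso].
    destruct (ivt_on a b (fun t => t - f t) v z0 0 Hab (cont_id_minus a b f Hcont)) as [c [Hc Hcf]];
      try lra.
    assert (Hcz : c <> z0) by (intro; subst c; lra).
    assert (z0 <= c). { apply Hz0min. split; [lra|]. rewrite Hg2. replace (f c) with c by lra. lra. }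
    lra. }
  assert (Hdz0 : d < z0).
  { destruct (Rle_lt_dec z0 d) as [Hl|]; [exfalso|assumption].
    assert (v = z0) by lra. assert (v = p0) by (rewrite <- Hgv; subst v; congruence).
    apply (Hpi 2%nat); [lia|]. rewrite Hg2. rewrite <- H0, Hfv, He. now rewrite H0. }
  assert (Hu0z0 : u0 < z0).
  { destruct (Rle_lt_dec z0 u0) as [Hl|]; [exfalso|assumption].
    assert (u0 = z0) by lra. subst u0. lra. }
  assert (Hgd : forall y, v <= y < u0 -> iter f 2 y < d).
  { intros y Hy. destruct (Rle_lt_dec d (iter f 2 y)) as [Hl|]; [exfalso|assumption].
    destruct (ivt_on a b (iter f 2) v y d Hab (Hc2 2%nat)) as [c [Hc Hcf]]; try lra.
    assert (u0 <= c) by (apply Hu0min; split; [lra|exact Hcf]). lra. }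
  assert (Hz0ev : forall j, iter f (2*j) z0 = z0).
  { induction j. reflexivity. replace (2 * S j)%nat with (2 + 2*j)%nat by lia.
    rewrite iter_add, IHj. exact Hz0f. }
  assert (Hu0odd : forall j, iter f (2*j+5) u0 = f z0).
  { intro j. replace (2*j+5)%nat with ((1 + 2*j + 2) + 2)%nat by lia.
    rewrite iter_add, Hu0f, iter_add, Hdf, iter_add, Hz0ev. reflexivity. }
  assert (Hcover : forall s, exists w, u0 <= w <= z0 /\ iter f (2*s) w = u0).
  { induction s. exists u0. split; [lra|reflexivity].
    destruct IHs as [w' [Hw' Hw'f]].
    destruct (ivt_on a b (iter f 2) u0 z0 w' Hab (Hc2 2%nat)) as [w [Hw Hwf]]; try lra.
    exists w. split; [exact Hw|]. replace (2 * S s)%nat with (2*s + 2)%nat by lia.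
    rewrite iter_add, Hwf. exact Hw'f. }
  destruct Hmodd as [bb Hbb]. destruct Hkodd as [c Hc].
  assert (HN : (m + 2*n = 2*(bb+n-2) + 5)%nat) by lia.
  assert (Hk1 : k <> 1%nat).
  { intro Hk1e; rewrite Hk1e in Hkx. assert (z0 <= x); [|lra]. apply Hz0min. split; [lra|].
    rewrite Hg2. change (iter f 1 x) with (f x) in Hkx. now rewrite !Hkx. }
  assert (Hxu : x < u0).
  { destruct (Rle_lt_dec u0 x) as [Hl|]; [exfalso|assumption].
    assert (x = u0) by lra. subst x.
    assert (H2k : iter f (k + k) u0 = u0) by (rewrite iter_add, !Hkx; reflexivity).
    replace (k+k)%nat with (2*(k-2) + 2 + 2)%nat in H2k by lia.
    rewrite !iter_add, Hu0f, Hdf, Hz0ev in H2k. lra. }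
  assert (HA : iter f (m + 2*n) x < d -> False).
  { intro Hl. assert (Hu : iter f (m+2*n) u0 = f z0) by (rewrite HN; apply Hu0odd).
    destruct (ivt_on a b (iter f (m+2*n)) x u0 d Hab (Hc2 _)) as [y [Hy Hyf]]; try lra.
    assert (y <= mu) by (apply Hmumax; split; [lra|exact Hyf]).
    assert (y = x) by lra. subst y. lra. }
  assert (HB : forall j s, (m + 2*n = 2*j+5 + 2*s + 2)%nat -> iter f (2*j+5) x < u0 -> False).
  { intros j s Hjs Hl. destruct (Hcover s) as [w [Hw Hwf]].
    destruct (ivt_on a b (iter f (2*j+5)) x u0 w Hab (Hc2 _)) as [y [Hy Hyf]]; try lra.
    { rewrite Hu0odd. lra. }
    assert (Hyd : iter f (m+2*n) y = d).
    { rewrite Hjs. replace (2*j+5 + 2*s + 2)%nat with (2 + (2*s + (2*j+5)))%nat by lia.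
      rewrite (iter_add f 2), (iter_add f (2*s)), Hyf, Hwf. exact Hu0f. }
    assert (y <= mu) by (apply Hmumax; split; [lra|exact Hyd]).
    assert (y = x) by lra. subst y. lra. }
  assert (Hg5 : iter f 5 x = iter f 2 (iter f 3 x)) by (rewrite <- iter_add; reflexivity).
  destruct (Nat.eq_dec k 3) as [->|Hk3].
  - rewrite Hkx in Hg5. assert (Hgx := Hgd x ltac:(lra)).
    destruct (Nat.eq_dec (m+2*n) 5) as [H5|H5].
    + apply HA. rewrite H5, Hg5. exact Hgx.
    + apply (HB 0%nat (bb+n-3)%nat); [lia|]. simpl (2*0+5)%nat. lra.
  - apply (HB (c-2)%nat (bb+n-c-1)%nat); [lia|].
    replace (2*(c-2)+5)%nat with k by lia. lra.
Qed.
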